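(* Let $R$ be a regular ring with unity, and let $e,f$ be idempotents of $R$. Then $f(1-e)=f$ if and only if $M(f,e)=\{0\}$.
   Context: A ring is regular if for every $x$ there is $y$ with $xyx=x$. For idempotents $a,b$ of $R$, $M(a,b)=\{g \text{ idempotent in } R: ga=g \text{ and } bg=g\}$. (The condition $f(1-e)=f$ is the relation $f\,\omega^l\,(1-e)$.) *)

(* Defs.v *)
From mathcomp Require Import all_boot all_algebra.
Set Implicit Arguments. Unset Strict Implicit. Unset Printing Implicit Defensive.
Import GRing.Theory.
Local Open Scope ring_scope.

Definition regular_ring (R : pzRingType) : Prop :=
  forall x : R, exists y : R, x * y * x = x.

Definition idem_elt (R : pzRingType) (x : R) : Prop := x * x = x.

Definition Mset (R : pzRingType) (a b : R) : R -> Prop :=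
  fun g => idem_elt g /\ g * a = g /\ b * g = g.

(* Main.v *)
Require Import Defs.
From mathcomp Require Import all_boot all_algebra.
Local Open Scope ring_scope.
Import GRing.Theory.

Lemma inner_inv (R : pzRingType) (x y : R) : x * y * x = x ->
  x * (y * x * y) * x = x /\ (y * x * y) * x * (y * x * y) = y * x * y.
Proof.
move=> hy; split.
  by rewrite !mulrA !hy.
have -> : y * x * y * x * (y * x * y) = y * (x * y * x) * (y * x * y) by rewrite !mulrA.
rewrite hy.
have -> : y * x * (y * x * y) = y * (x * y * x) * y by rewrite !mulrA.
by rewrite hy.
Qed.

Theorem corollary2p3 (R : pzRingType) (e f : R) :
  regular_ring R -> idem_elt e -> idem_elt f ->
  (f * (1 - e) = f <-> (forall g : R, Mset f e g <-> g = 0)).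
Proof.
move=> reg he hf; rewrite /Mset /idem_elt.
have fe0 : f * (1 - e) = f <-> f * e = 0.
  rewrite mulrBr mulr1; split=> [H|->]; last by rewrite subr0.
  have -> : f * e = f - (f - f * e) by rewrite opprB addrC subrK.
  by rewrite H subrr.
split.
  move/fe0=> H g; split; last by move=> ->; rewrite !(mul0r, mulr0).
  move=> [gg [gf eg]].
  have -> : g = g * f * (e * g) by rewrite gf eg gg.
  by rewrite mulrA -(mulrA g f e) H mulr0 mul0r.
move=> H; apply/fe0; have [y hy] := reg (f * e).
have [h1 h2] := inner_inv _ _ _ hy.
move: h1 h2; set y' := y * (f * e) * y => h1 h2.
have g0 : e * y' * f = 0.
  apply/H; split; last split.
  - have -> : e * y' * f * (e * y' * f) = e * (y' * (f * e) * y') * f by rewrite !mulrA.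
    by rewrite h2.
  - by rewrite -mulrA hf.
  - by rewrite !mulrA he.
rewrite -h1.
have -> : f * e * y' * (f * e) = f * (e * y' * f) * e by rewrite !mulrA.
by rewrite g0 mulr0 mul0r.
Qed.
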